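(* The action map $\Omega_u\times Int(P)\to\Omega_u$, $(A,a)\mapsto Aa$, is open.
   Context: Standing assumptions: $G$ is a second countable locally compact group with left Haar measure $dg$; $P\subset G$ is a closed subsemigroup with identity $e\in P$, such that $G=PP^{-1}$ and the interior $Int(P)$ of $P$ is dense in $P$. $\mathcal{C}(G)$ denotes the space of closed subsets of $G$ with the Vietoris (Fell) topology, a compact metrisable topology in which, for a metric $d$ on $G$ compatible with its topology, a sequence $A_n$ converges to $A$ iff $\{x:\limsup_n d(x,A_n)=0\}=\{x:\liminf_n d(x,A_n)=0\}=A$. $\Omega_u:=\{A\in\mathcal{C}(G): P^{-1}\subset A,\ P^{-1}A\subset A\}$, a compact subspace of $\mathcal{C}(G)$, with right $P$-action $A\cdot a=Aa=\{xa:x\in A\}$. *)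

(* Defs.v *)
From Stdlib Require Import List.
Import ListNotations.

Section Topology.
Variable X : Type.
Variable opens : (X -> Prop) -> Prop.

Definition is_topology : Prop :=
  opens (fun _ => True) /\
  (forall F : (X -> Prop) -> Prop,
      (forall U, F U -> opens U) -> opens (fun x => exists U, F U /\ U x)) /\
  (forall U V, opens U -> opens V -> opens (fun x => U x /\ V x)).

Definition is_closed (A : X -> Prop) : Prop := opens (fun x => ~ A x).

Definition interior (A : X -> Prop) : X -> Prop :=
  fun x => exists U, opens U /\ U x /\ (forall y, U y -> A y).

Definition closure (A : X -> Prop) : X -> Prop :=
  fun x => forall U, opens U -> U x -> exists y, U y /\ A y.

Definition compact (K : X -> Prop) : Prop :=
  forall C : (X -> Prop) -> Prop,
    (forall U, C U -> opens U) ->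
    (forall x, K x -> exists U, C U /\ U x) ->
    exists l : list (X -> Prop),
      (forall U, In U l -> C U) /\
      (forall x, K x -> exists U, In U l /\ U x).

Definition hausdorff : Prop :=
  forall x y, x <> y -> exists U V, opens U /\ opens V /\ U x /\ V y /\
     (forall z, U z -> V z -> False).

Definition locally_compact : Prop :=
  forall x, exists U K, opens U /\ U x /\ (forall y, U y -> K y) /\ compact K.

Definition second_countable : Prop :=
  exists B : nat -> X -> Prop, (forall n, opens (B n)) /\
    forall U x, opens U -> U x -> exists n, B n x /\ (forall y, B n y -> U y).
End Topology.

Arguments is_closed {X} opens A.
Arguments interior {X} opens A _.
Arguments closure {X} opens A _.
Arguments compact {X} opens K.

Definition prod_opens {X Y : Type} (oX : (X -> Prop) -> Prop) (oY : (Y -> Prop) -> Prop)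
  (W : X * Y -> Prop) : Prop :=
  forall p, W p -> exists U V, oX U /\ oY V /\ U (fst p) /\ V (snd p) /\
     (forall x y, U x -> V y -> W (x, y)).

Definition is_lcsc_group (G : Type) (mul : G -> G -> G) (inv : G -> G) (e : G)
  (opens : (G -> Prop) -> Prop) : Prop :=
  (forall x y z, mul x (mul y z) = mul (mul x y) z) /\
  (forall x, mul e x = x) /\ (forall x, mul x e = x) /\
  (forall x, mul (inv x) x = e) /\ (forall x, mul x (inv x) = e) /\
  is_topology G opens /\
  (forall x y U, opens U -> U (mul x y) ->
     exists V1 V2, opens V1 /\ opens V2 /\ V1 x /\ V2 y /\
       (forall x' y', V1 x' -> V2 y' -> U (mul x' y'))) /\
  (forall x U, opens U -> U (inv x) ->
     exists V, opens V /\ V x /\ (forall x', V x' -> U (inv x'))) /\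
  hausdorff G opens /\ locally_compact G opens /\ second_countable G opens.

Definition standing_P (G : Type) (mul : G -> G -> G) (inv : G -> G) (e : G)
  (opens : (G -> Prop) -> Prop) (P : G -> Prop) : Prop :=
  is_closed opens P /\ P e /\
  (forall x y, P x -> P y -> P (mul x y)) /\
  (forall g, exists p q, P p /\ P q /\ g = mul p (inv q)) /\
  (forall x, P x -> closure opens (interior opens P) x).

(* Fell (Vietoris) topology on the closed subsets of G, defined on all
   subsets (only closed ones will be considered). *)
Definition fell_subbasic {G : Type} (opens : (G -> Prop) -> Prop)
  (S : (G -> Prop) -> Prop) : Prop :=
  (exists K, compact opens K /\
     forall A, S A <-> (forall x, K x -> A x -> False)) \/
  (exists U, opens U /\ forall A, S A <-> (exists x, U x /\ A x)).

Definition fell_opens {G : Type} (opens : (G -> Prop) -> Prop)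
  (W : (G -> Prop) -> Prop) : Prop :=
  forall A, W A -> exists l : list ((G -> Prop) -> Prop),
    (forall S, In S l -> fell_subbasic opens S /\ S A) /\
    (forall B, (forall S, In S l -> S B) -> W B).

Definition Omega_u {G : Type} (mul : G -> G -> G) (inv : G -> G)
  (opens : (G -> Prop) -> Prop) (P : G -> Prop) (A : G -> Prop) : Prop :=
  is_closed opens A /\
  (forall p, P p -> A (inv p)) /\
  (forall p x, P p -> A x -> A (mul (inv p) x)).

Definition rtrans {G : Type} (mul : G -> G -> G) (A : G -> Prop) (a : G) : G -> Prop :=
  fun y => exists x, A x /\ y = mul x a.

(* Main.v *)
Require Import Defs.
From Stdlib Require Import List Classical FunctionalExtensionality PropExtensionality.
Import ListNotations.

Lemma top_open_local (X:Type) (opens : (X->Prop)->Prop) (Ht: is_topology X opens)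
  (S: X->Prop) : (forall x, S x -> exists U, opens U /\ U x /\ forall y, U y -> S y) -> opens S.
Proof.
  intros H. destruct Ht as [_ [Hu _]].
  assert (E: S = (fun x => exists U, (opens U /\ forall y, U y -> S y) /\ U x)).
  { apply functional_extensionality; intro x; apply propositional_extensionality; split.
    - intro Hx. destruct (H x Hx) as [U [HU [Ux HUS]]]. exists U; auto.
    - intros [U [[_ HUS] Ux]]; auto. }
  rewrite E. apply (Hu (fun U => opens U /\ forall y, U y -> S y)). intros U [HU _]; exact HU.
Qed.

Lemma top_true (X:Type) (opens : (X->Prop)->Prop) (Ht: is_topology X opens) :
  opens (fun _ => True).
Proof. destruct Ht as [H _]; exact H. Qed.

Lemma top_inter (X:Type) (opens : (X->Prop)->Prop) (Ht: is_topology X opens) U V :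
  opens U -> opens V -> opens (fun x => U x /\ V x).
Proof. destruct Ht as [_ [_ H]]; apply H. Qed.

Lemma compact_inter_closed (X:Type) (opens : (X->Prop)->Prop) K F :
  compact opens K -> is_closed opens F -> compact opens (fun x => K x /\ F x).
Proof.
  intros HK HF C HC Hcov.
  set (C' := fun U => C U \/ U = (fun x => ~ F x)).
  destruct (HK C') as [l [Hl Hlc]].
  - intros U [HU|HU]; [auto|subst U; exact HF].
  - intros x Kx. destruct (classic (F x)) as [H|H].
    + destruct (Hcov x (conj Kx H)) as [U [CU Ux]]; exists U; split; [left|]; auto.
    + exists (fun x => ~F x); split; [right; reflexivity| exact H].
  - assert (Aux: forall l0, (forall U, In U l0 -> C' U) -> exists l', (forall U, In U l' -> C U) /\
       (forall U x, In U l0 -> U x -> F x -> exists U', In U' l' /\ U' x)).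
    { induction l0 as [|a l0 IH]; intros H0.
      - exists nil. split; [intros U []| intros U x []].
      - destruct IH as [l' [H1 H2]]. { intros U HU; apply H0; right; auto. }
        destruct (classic (C a)) as [Ca|nCa].
        + exists (a :: l'). split.
          * intros U [->|HU]; auto.
          * intros U x [->|HU] Ux Fx.
            -- exists U; split; [left|]; auto.
            -- destruct (H2 U x HU Ux Fx) as [U' [HU' U'x]]. exists U'; split; [right|]; auto.
        + exists l'. split; auto.
          intros U x [->|HU] Ux Fx.
          * destruct (H0 U (or_introl eq_refl)) as [CU| EU]; [contradiction|].
            subst U. contradiction.
          * eauto. }
    destruct (Aux l Hl) as [l' [H1 H2]]. exists l'. split; auto.
    intros x [Kx Fx]. destruct (Hlc x Kx) as [U [HU Ux]]. eauto.
Qed.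

Lemma sep_point_compact (X:Type) (opens : (X->Prop)->Prop) (Ht: is_topology X opens)
  (Hh: hausdorff X opens) M g : compact opens M -> ~ M g ->
  exists Y Z, opens Y /\ opens Z /\ Y g /\ (forall y, M y -> Z y) /\ (forall z, Y z -> Z z -> False).
Proof.
  intros HM Hg.
  destruct (HM (fun V => opens V /\ exists U, opens U /\ U g /\ forall z, U z -> V z -> False))
    as [l [Hl Hlc]].
  - intros U [H _]; exact H.
  - intros x Mx. assert (H: g <> x) by (intro; subst; contradiction).
    destruct (Hh g x H) as [U [V [HU [HV [Ug [Vx Hd]]]]]]. exists V.
    split; [split; [exact HV| exists U; auto]|exact Vx].
  - assert (Hy: forall l0, (forall V, In V l0 -> opens V /\ exists U, opens U /\ U g /\
        forall z, U z -> V z -> False) -> exists Y, opens Y /\ Y g /\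
        forall V z, In V l0 -> Y z -> V z -> False).
    { induction l0 as [|a l0 IH]; intros Hl0.
      - exists (fun _ => True). split; [apply top_true; auto| split; [exact I| intros V z []]].
      - destruct IH as [Y [HY [Yg HYd]]]. { intros V HV; apply Hl0; right; auto. }
        destruct (Hl0 a (or_introl eq_refl)) as [_ [U [HU [Ug HUd]]]].
        exists (fun z => U z /\ Y z). split; [apply top_inter; auto| split; [auto|]].
        intros V z [<-|HV] [Uz Yz] Vz; eauto. }
    destruct (Hy l Hl) as [Y [HY [Yg HYd]]].
    exists Y, (fun z => exists V, In V l /\ V z). refine (conj HY (conj _ (conj Yg (conj _ _)))).
    + destruct Ht as [_ [Hu _]]. apply (Hu (fun V => In V l)). intros U HU; apply (Hl U HU).
    + intros y My. destruct (Hlc y My) as [U [HU Uy]]; eauto.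
    + intros z Yz [V [HV Vz]]; eauto.
Qed.

Ltac dG HG := destruct HG as [Hassoc [Hel [Her [Hinvl [Hinvr [Ht [Hmc [Hic [Hh [Hlc Hsc]]]]]]]]]].

Lemma rtrans_closed (G : Type) (mul : G -> G -> G) (inv : G -> G) (e : G)
  (opens : (G -> Prop) -> Prop) (HG : is_lcsc_group G mul inv e opens) A a :
  is_closed opens A -> is_closed opens (rtrans mul A a).
Proof.
  dG HG. intros HA. unfold is_closed in *. apply top_open_local; auto.
  intros y Hy.
  assert (Hn: ~ A (mul y (inv a))).
  { intro H. apply Hy. exists (mul y (inv a)). split; auto.
    rewrite <- Hassoc, Hinvl, Her. reflexivity. }
  destruct (Hmc y (inv a) _ HA Hn) as [V1 [V2 [HV1 [HV2 [V1y [V2a Hm]]]]]].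
  exists V1. split; auto. split; auto. intros y' Hy' [x [Ax Ey]]. subst y'.
  apply (Hm _ _ Hy' V2a). rewrite <- Hassoc, Hinvr, Her. exact Ax.
Qed.

Definition Good {G : Type} (mul : G -> G -> G) (inv : G -> G)
  (opens : (G -> Prop) -> Prop) (B0 : G -> Prop) (a0 : G) (T : (G->Prop) -> Prop) : Prop :=
  exists ls W, (forall S, In S ls -> fell_subbasic opens S /\ S B0) /\ opens W /\ W a0 /\
   forall C a, (forall S, In S ls -> S C) -> W a -> T (rtrans mul C (inv a)).

Lemma Good_true {G : Type} mul inv (opens : (G -> Prop) -> Prop) (Ht : is_topology G opens) B0 a0 :
  Good mul inv opens B0 a0 (fun _ => True).
Proof.
  exists nil, (fun _ => True). refine (conj _ (conj _ (conj I _))).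
  - intros S [].
  - apply top_true; auto.
  - intros; exact I.
Qed.

Lemma Good_and {G : Type} mul inv (opens : (G -> Prop) -> Prop) (Ht : is_topology G opens) B0 a0 T1 T2 :
  Good mul inv opens B0 a0 T1 -> Good mul inv opens B0 a0 T2 ->
  Good mul inv opens B0 a0 (fun A => T1 A /\ T2 A).
Proof.
  intros [l1 [W1 [H1 [HW1 [W1a H1']]]]] [l2 [W2 [H2 [HW2 [W2a H2']]]]].
  exists (l1 ++ l2), (fun x => W1 x /\ W2 x). refine (conj _ (conj _ (conj (conj W1a W2a) _))).
  - intros S HS. apply in_app_or in HS. destruct HS; [apply H1|apply H2]; auto.
  - apply top_inter; auto.
  - intros C a HC [Wa1 Wa2]. split.
    + apply H1'; auto. intros S HS; apply HC; apply in_or_app; auto.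
    + apply H2'; auto. intros S HS; apply HC; apply in_or_app; auto.
Qed.

Lemma Good_mono {G : Type} mul inv (opens : (G -> Prop) -> Prop) B0 a0 (T1 T2 : (G -> Prop) -> Prop) :
  Good mul inv opens B0 a0 T1 -> (forall A, T1 A -> T2 A) -> Good mul inv opens B0 a0 T2.
Proof.
  intros [l1 [W1 [H1 [HW1 [W1a H1']]]]] Hm. exists l1, W1. refine (conj H1 (conj HW1 (conj W1a _))).
  intros C a HC Wa; apply Hm; auto.
Qed.

Lemma Good_list {G : Type} mul inv (opens : (G -> Prop) -> Prop) (Ht : is_topology G opens) B0 a0
  (I : Type) (l : list I) (T : I -> (G -> Prop) -> Prop) :
  (forall i, In i l -> Good mul inv opens B0 a0 (T i)) ->
  Good mul inv opens B0 a0 (fun A => forall i, In i l -> T i A).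
Proof.
  induction l as [|a l IH]; intros H.
  - eapply Good_mono. apply Good_true; auto. intros A _ i [].
  - eapply Good_mono. apply Good_and; auto. apply (H a (or_introl eq_refl)).
    apply IH. intros i Hi; apply H; right; auto.
    intros A [HA1 HA2] i [<-|Hi]; auto.
Qed.

Lemma Good_hits (G : Type) (mul : G -> G -> G) (inv : G -> G) (e : G)
  (opens : (G -> Prop) -> Prop) (HG : is_lcsc_group G mul inv e opens) A0 a0 U :
  opens U -> (exists x, U x /\ A0 x) ->
  Good mul inv opens (rtrans mul A0 a0) a0 (fun A => exists x, U x /\ A x).
Proof.
  dG HG. intros HU [x0 [Ux0 Ax0]].
  assert (E0 : mul (mul x0 a0) (inv a0) = x0) by (rewrite <- Hassoc, Hinvr, Her; reflexivity).
  rewrite <- E0 in Ux0.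
  destruct (Hmc _ _ U HU Ux0) as [V1 [V2 [HV1 [HV2 [V1y [V2a Hm]]]]]].
  destruct (Hic a0 V2 HV2 V2a) as [W [HW [Wa HWi]]].
  exists [fun A => exists y, V1 y /\ A y], W. refine (conj _ (conj HW (conj Wa _))).
  - intros S [ES|[]]. subst S. split.
    + right. exists V1. split; auto. intro; reflexivity.
    + exists (mul x0 a0). split; auto. exists x0; auto.
  - intros C a HC Wa'. destruct (HC _ (or_introl eq_refl)) as [y [V1y' Cy]].
    exists (mul y (inv a)). split.
    + apply Hm; auto.
    + exists y; auto.
Qed.

Lemma Good_misses (G : Type) (mul : G -> G -> G) (inv : G -> G) (e : G)
  (opens : (G -> Prop) -> Prop) (HG : is_lcsc_group G mul inv e opens) A0 a0 K :
  compact opens K -> is_closed opens A0 -> (forall x, K x -> A0 x -> False) ->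
  Good mul inv opens (rtrans mul A0 a0) a0 (fun A => forall x, K x -> A x -> False).
Proof.
  intros HK HA0 Hdis.
  assert (HB0 : is_closed opens (rtrans mul A0 a0)) by (apply (rtrans_closed G mul inv e); auto).
  pose proof HG as HG'. dG HG'.
  destruct (HK (fun Q => opens Q /\ Good mul inv opens (rtrans mul A0 a0) a0
      (fun A => forall x, Q x -> A x -> False))) as [l [Hl Hlcv]].
  - intros Q [HQ _]; exact HQ.
  - intros k Kk.
    assert (Hg : ~ rtrans mul A0 a0 (mul k a0)).
    { intros [x [Ax Hx]]. apply (f_equal (fun z => mul z (inv a0))) in Hx.
      rewrite <- !Hassoc, Hinvr, !Her in Hx. subst x. eauto. }
    destruct (Hlc (mul k a0)) as [Ug [Kg [HUg [Ugg [HUK HKg]]]]].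
    assert (HM : compact opens (fun y => Kg y /\ rtrans mul A0 a0 y))
      by (apply compact_inter_closed; auto).
    destruct (sep_point_compact G opens Ht Hh _ (mul k a0) HM)
      as [Y [Z [HY [HZ [Yg [MZ YZ]]]]]].
    { intros [_ H]; contradiction. }
    assert (HL : compact opens (fun y => Kg y /\ ~ Z y)).
    { apply compact_inter_closed; auto. unfold is_closed.
      replace (fun x => ~ ~ Z x) with Z; auto.
      apply functional_extensionality; intro x; apply propositional_extensionality; split;
        [intros H1 H2; auto | apply NNPP]. }
    assert (Hm0 : (fun y => Ug y /\ Y y) (mul k a0)) by (split; auto).
    destruct (Hmc k a0 _ (top_inter _ _ Ht _ _ HUg HY) Hm0)
      as [V1 [V2 [HV1 [HV2 [V1k [V2a Hm]]]]]].
    exists V1. split; [split; [exact HV1|] | exact V1k].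
    exists [fun A => forall x, (Kg x /\ ~ Z x) -> A x -> False], V2.
    refine (conj _ (conj HV2 (conj V2a _))).
    + intros S [ES|[]]. subst S. split.
      * left. exists (fun y => Kg y /\ ~ Z y). split; auto. intro; reflexivity.
      * intros x [Kgx nZx] Bx. apply nZx. apply MZ. split; auto.
    + intros C a HC V2a' x Qx [c [Cc Ex]]. subst x.
      apply (HC _ (or_introl eq_refl) c); auto.
      destruct (Hm _ _ Qx V2a') as [U1 Y1].
      rewrite <- Hassoc, Hinvl, Her in U1, Y1.
      split; [apply HUK; auto | intro Zc; eapply YZ; eauto].
  - eapply Good_mono.
    + apply (Good_list mul inv opens Ht _ _ _ l (fun Q A => forall x, Q x -> A x -> False)).
      intros Q HQ. apply (Hl Q HQ).
    + intros A HA x Kx Ax. destruct (Hlcv x Kx) as [Q [HQ Qx]]. eapply HA; eauto.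
Qed.

Lemma Good_subbasic (G : Type) (mul : G -> G -> G) (inv : G -> G) (e : G)
  (opens : (G -> Prop) -> Prop) (HG : is_lcsc_group G mul inv e opens) A0 a0 S :
  is_closed opens A0 -> fell_subbasic opens S -> S A0 ->
  Good mul inv opens (rtrans mul A0 a0) a0 S.
Proof.
  intros HA0 [[K [HK HS]]|[U [HU HS]]] HSA.
  - eapply Good_mono. apply (Good_misses G mul inv e opens HG A0 a0 K); auto.
    apply HS; auto. intros A HA; apply HS; auto.
  - eapply Good_mono. apply (Good_hits G mul inv e opens HG A0 a0 U); auto.
    apply HS; auto. intros A HA; apply HS; auto.
Qed.

Theorem mainTheorem6 (G : Type) (mul : G -> G -> G) (inv : G -> G) (e : G)
  (opens : (G -> Prop) -> Prop) (P : G -> Prop)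
  (HG : is_lcsc_group G mul inv e opens)
  (HP : standing_P G mul inv e opens P)
  (O : (G -> Prop) * G -> Prop)
  (HO : prod_opens (fell_opens opens) opens O) :
  exists V : (G -> Prop) -> Prop, fell_opens opens V /\
    forall B : G -> Prop,
      (exists A a, Omega_u mul inv opens P A /\ interior opens P a /\ O (A, a) /\
         (forall y, B y <-> rtrans mul A a y))
      <-> (Omega_u mul inv opens P B /\ V B).
Proof.
  set (Img := fun B : G -> Prop => exists A a, Omega_u mul inv opens P A /\ interior opens P a /\
     O (A, a) /\ (forall y, B y <-> rtrans mul A a y)).
  exists (fun B => exists l : list ((G -> Prop) -> Prop),
     (forall S, In S l -> fell_subbasic opens S /\ S B) /\
     (forall C, (forall S, In S l -> S C) -> Omega_u mul inv opens P C -> Img C)).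
  pose proof HG as HG'. dG HG'.
  destruct HP as [HPc [HPe [HPm [HPg HPi]]]].
  split.
  { intros A [l [Hl HlC]]. exists l. split.
    - intros S HS; apply (Hl S HS).
    - intros B HB. exists l. split; [|exact HlC]. intros S HS; split; [apply (proj1 (Hl S HS))| apply HB; exact HS]. }
  intros B. split.
  2:{ intros [HB [l [Hl HlC]]]. apply HlC; auto. intros S HS; apply (Hl S HS). }
  intros [A0 [a0 [[HA0c [HA0P HA0i]] [Ha0 [HOa HBeq]]]]].
  assert (EB : B = rtrans mul A0 a0).
  { apply functional_extensionality; intro y; apply propositional_extensionality; auto. }
  subst B. clear HBeq.
  assert (Pa0 : P a0).
  { destruct Ha0 as [U [_ [Ua HUP]]]; auto. }
  split.
  {
    split; [apply (rtrans_closed G mul inv e); auto| split].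
    - intros p Pp. exists (mul (inv p) (inv a0)). split.
      + apply HA0i; auto.
      + rewrite <- Hassoc, Hinvl, Her; reflexivity.
    - intros p x Pp [y [Ay Ex]]. subst x. exists (mul (inv p) y). split.
      + apply HA0i; auto.
      + apply Hassoc. }
  destruct (HO (A0, a0) HOa) as [UF [V' [HUF [HV' [UFA [V'a HUV]]]]]].
  simpl in UFA, V'a.
  destruct (HUF A0 UFA) as [l0 [Hl0 Hl0U]].
  assert (Hgood : Good mul inv opens (rtrans mul A0 a0) a0 (fun A => forall S, In S l0 -> S A)).
  { apply Good_list; auto. intros S HS. destruct (Hl0 S HS) as [HSb HSA].
    apply (Good_subbasic G mul inv e); auto. }
  destruct Hgood as [ls [W1 [Hls [HW1 [W1a Hgd]]]]].
  destruct Ha0 as [UP [HUP [UPa UPP]]].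
  set (W := fun x => V' x /\ (UP x /\ W1 x)).
  assert (HW : opens W) by (repeat apply top_inter; auto).
  exists ((fun A => exists x, W x /\ A x) :: ls). split.
  - intros S [ES|HS].
    + subst S. split.
      * right. exists W. split; auto. intro; reflexivity.
      * exists a0. split; [unfold W; auto|]. exists e. split.
        -- assert (Hie : inv e = e) by (rewrite <- (Her (inv e)); apply Hinvl).
           rewrite <- Hie. apply HA0P; auto.
        -- symmetry; apply Hel.
    + apply Hls; auto.
  - intros C HC [HCc [HCP HCi]].
    destruct (HC _ (or_introl eq_refl)) as [a [[V'a' [UPa' W1a']] Ca]].
    exists (rtrans mul C (inv a)), a. split; [|split; [|split]].
    + split; [apply (rtrans_closed G mul inv e); auto| split].
      * intros p Pp. exists (mul (inv p) a). split.
        -- apply HCi; auto.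
        -- rewrite <- Hassoc, Hinvr, Her; reflexivity.
      * intros p x Pp [y [Cy Ex]]. subst x. exists (mul (inv p) y). split.
        -- apply HCi; auto.
        -- apply Hassoc.
    + exists UP; auto.
    + apply HUV; auto. apply Hl0U. apply Hgd; auto.
      intros S HS; apply HC; right; auto.
    + intro y. split.
      * intro Cy. exists (mul y (inv a)). split.
        -- exists y; auto.
        -- rewrite <- Hassoc, Hinvl, Her; reflexivity.
      * intros [x [[c [Cc Ex]] Ey]]. subst y x.
        rewrite <- Hassoc, Hinvl, Her; exact Cc.
Qed.
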